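(* The block-asynchronous linear iteration for solving the lower block triangular system $\mathbf{Lx}=\mathbf{b}$ converges in a finite number of steps to the solution $\mathbf{L}^{-1}\mathbf{b}$.
   Context: $\mathbf{L}\in\mathbb{R}^{n\times n}$ is lower block triangular with square $b\times b$ blocks ($n$ divisible by $b$, $n/b$ blocks) and nonsingular diagonal blocks, split as $\mathbf{L}=\mathbf{D}+\tilde{\mathbf{L}}$ with $\mathbf{D}$ block diagonal and $\tilde{\mathbf{L}}$ strictly lower block triangular. Let $\boldsymbol{\psi}(\mathbf{x}):=\mathbf{D}^{-1}\mathbf{b}-\mathbf{D}^{-1}\tilde{\mathbf{L}}\mathbf{x}$, and denote by $\mathbf{x}_i$, $\boldsymbol{\psi}_i$ the $i$th sub-vector of length $b$. The block-asynchronous iteration is $\mathbf{x}_i^{j+1}=\mathbf{x}_i^j$ if $i\neq u(j)$ and $\mathbf{x}_i^{j+1}=\boldsymbol{\psi}_i(x_1^{j-s_1(j)},\dots,x_n^{j-s_n(j)})$ if $i=u(j)$, where the shift functions $s_\alpha:\mathbb{N}\to\mathbb{N}$ ($\alpha=1,\dots,n$) satisfy $0\le s_\alpha(j)\le\min\{j-1,\hat s\}$ for some fixed $\hat s\in\mathbb{N}$, and the update function $u:\mathbb{N}\to\{1,\dots,n/b\}$ satisfies: for every $i\in\{1,\dots,n/b\}$ and $j\in\mathbb{N}$ there exists $l>j$ with $u(l)=i$. *)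

(* Defs.v *)
From HB Require Import structures.
From mathcomp Require Import all_boot all_order all_algebra.
Set Implicit Arguments. Unset Strict Implicit. Unset Printing Implicit Defensive.
Import Order.TTheory GRing.Theory Num.Theory.
Local Open Scope ring_scope.

(* Block structure: n = m * b, with m = n/b blocks of size b.
   Scalar index alpha : 'I_(m*b) lies in block alpha %/ b (0-based).
   bidx k p is the p-th scalar index of the k-th block, i.e. k*b + p. *)
Lemma bidx_lt (m b : nat) (k : 'I_m) (p : 'I_b) : (k * b + p < m * b)%N.
Proof.
case: k => k hk; case: p => p hp /=.
apply: (@leq_trans (k * b + b)); first by rewrite ltn_add2l.
by rewrite -mulSnr leq_mul2r hk orbT.
Qed.

Definition bidx (m b : nat) (k : 'I_m) (p : 'I_b) : 'I_(m * b) :=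
  Ordinal (bidx_lt k p).

Definition diag_block (R : pzRingType) (m b : nat) (L : 'M[R]_(m * b)) (k : 'I_m)
  : 'M[R]_b := \matrix_(p, q) L (bidx k p) (bidx k q).

Definition lower_block_triangular (R : pzRingType) (m b : nat) (L : 'M[R]_(m * b)) :=
  forall i j : 'I_(m * b), (i %/ b < j %/ b)%N -> L i j = 0.

Definition blockD (R : pzRingType) (m b : nat) (L : 'M[R]_(m * b)) : 'M[R]_(m * b) :=
  \matrix_(i, j) (if (i %/ b == j %/ b)%N then L i j else 0).

Definition blockLt (R : pzRingType) (m b : nat) (L : 'M[R]_(m * b)) : 'M[R]_(m * b) :=
  L - blockD L.

Definition psi (R : fieldType) (m b : nat) (L : 'M[R]_(m * b)) (bv x : 'cV[R]_(m * b))
  : 'cV[R]_(m * b) :=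
  invmx (blockD L) *m bv - invmx (blockD L) *m (blockLt L *m x).

(* Main.v *)
Require Import Defs.
From HB Require Import structures.
From mathcomp Require Import all_boot all_order all_algebra.
Set Implicit Arguments. Unset Strict Implicit. Unset Printing Implicit Defensive.
Import Order.TTheory GRing.Theory Num.Theory.
Local Open Scope ring_scope.
From mathcomp Require Import zify.

Lemma bpos_of (m b : nat) (i : 'I_(m * b)) : (0 < b)%N.
Proof. case: i => i /=; case: b => //; by rewrite muln0. Qed.

Lemma blk_lt (m b : nat) (i : 'I_(m * b)) : (i %/ b < m)%N.
Proof. by rewrite ltn_divLR ?(bpos_of i). Qed.

Lemma bidx_div (m b : nat) (c : 'I_m) (q : 'I_b) : ((bidx c q) %/ b)%N = c.
Proof.
rewrite /= divnMDl; last by case: q => q /=; case: b.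
by rewrite divn_small ?addn0.
Qed.

Lemma bidx_mod (m b : nat) (c : 'I_m) (q : 'I_b) : ((bidx c q) %% b)%N = q.
Proof. by rewrite /= modnMDl modn_small. Qed.

Definition unbidx (m b : nat) (i : 'I_(m * b)) : 'I_m * 'I_b :=
  (Ordinal (blk_lt i), Ordinal (ltn_pmod i (bpos_of i))).

Lemma bidx_unbidx (m b : nat) (i : 'I_(m * b)) :
  bidx (unbidx i).1 (unbidx i).2 = i.
Proof. by apply: val_inj => /=; rewrite -divn_eq. Qed.

Lemma sum_blocks (V : nmodType) (m b : nat) (F : 'I_(m * b) -> V) :
  \sum_i F i = \sum_(c < m) \sum_(q < b) F (bidx c q).
Proof.
rewrite pair_bigA /=.
rewrite (reindex (fun p : 'I_m * 'I_b => bidx p.1 p.2)) //=.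
exists (@unbidx m b) => [[c q] _|i _]; last exact: bidx_unbidx.
by congr pair; apply: val_inj; rewrite /= ?bidx_div ?bidx_mod.
Qed.

Lemma lbt_ker (R : fieldType) (m b : nat) (M : 'M[R]_(m * b)) :
  lower_block_triangular M -> (forall k, diag_block M k \in unitmx) ->
  forall v : 'cV_(m * b), M *m v = 0 -> v = 0.
Proof.
move=> hL hD v hv.
suff H : forall c (alpha : 'I_(m * b)), (alpha %/ b < c)%N -> v alpha 0 = 0.
  by apply/matrixP => i j; rewrite ord1 mxE; apply: (H m); apply: blk_lt.
elim=> [//|c IH] alpha.
rewrite ltnS leq_eqVlt => /orP [/eqP ha|]; last exact: IH.
have cm : (c < m)%N by rewrite -ha blk_lt.
pose cc : 'I_m := Ordinal cm.
pose vc : 'cV_b := \col_q v (bidx cc q) 0.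
have hz : diag_block M cc *m vc = 0.
  apply/matrixP => p j; rewrite ord1.
  have e := congr1 (fun A : 'cV[R]_(m * b) => A (bidx cc p) 0) hv.
  rewrite /= !mxE in e; rewrite !mxE; apply: (etrans _ e).
  rewrite sum_blocks (bigD1 cc) //= [X in _ = _ + X]big1 ?addr0.
    by apply: eq_bigr => q _; rewrite !mxE.
  move=> c' hc'; apply: big1 => q _.
  have : c' != cc by [].
  rewrite -(inj_eq val_inj) /= neq_ltn => /orP [lt|gt].
    by rewrite IH ?mulr0 // bidx_div.
  by rewrite hL ?mul0r // !bidx_div.
have vc0 : vc = 0 by rewrite -(mulKmx (hD cc) vc) hz mulmx0.
have hb : (0 < b)%N := bpos_of alpha.
have := congr1 (fun A : 'cV[R]_b => A (Ordinal (ltn_pmod alpha hb)) 0) vc0.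
rewrite !mxE => <-; congr (v _ 0); apply: val_inj => /=.
by rewrite -ha -divn_eq.
Qed.

Lemma ker_unit (R : fieldType) (n : nat) (M : 'M[R]_n) :
  (forall v : 'cV_n, M *m v = 0 -> v = 0) -> M \in unitmx.
Proof.
move=> H; rewrite -unitmx_tr -row_free_unit -kermx_eq0.
apply/eqP/row_matrixP => i; rewrite row0.
have h := mulmx_ker M^T.
have : row i (kermx M^T) *m M^T = 0 by rewrite -row_mul h row0.
move/(congr1 trmx); rewrite trmx_mul trmxK trmx0 => /H.
by move/(congr1 trmx); rewrite trmxK trmx0.
Qed.

Lemma blockD_lbt (R : pzRingType) (m b : nat) (L : 'M[R]_(m * b)) :
  lower_block_triangular L -> lower_block_triangular (blockD L).
Proof. by move=> hL i j h; rewrite mxE (ltn_eqF h). Qed.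

Lemma blockD_diag (R : pzRingType) (m b : nat) (L : 'M[R]_(m * b)) k :
  diag_block (blockD L) k = diag_block L k.
Proof. by apply/matrixP => p q; rewrite !mxE !bidx_div eqxx. Qed.

Lemma blockD_off (R : pzRingType) (m b : nat) (L : 'M[R]_(m * b)) (i j : 'I_(m * b)) :
  (i %/ b != j %/ b)%N -> blockD L i j = 0.
Proof. by move=> h; rewrite mxE (negbTE h). Qed.

Lemma invD_blk (R : fieldType) (m b : nat) (D : 'M[R]_(m * b)) :
  D \in unitmx -> (forall i j : 'I_(m * b), (i %/ b != j %/ b)%N -> D i j = 0) ->
  forall i j : 'I_(m * b), (i %/ b != j %/ b)%N -> invmx D i j = 0.
Proof.
move=> hU hD i j hij.
pose P := diag_mx (\row_k ((k %/ b == i %/ b)%N)%:R : 'rV[R]_(m * b)).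
have DP : D *m P = P *m D.
  apply/matrixP => k l; rewrite mul_mx_diag mul_diag_mx !mxE.
  case: (eqVneq (k %/ b)%N (l %/ b)%N) => e; first by rewrite e mulrC.
  by rewrite hD // mulr0 mul0r.
have EP : invmx D *m P = P *m invmx D.
  rewrite -[invmx D *m P]mulmx1 -(mulmxV hU) mulmxA -[invmx D *m P *m D]mulmxA.
  by rewrite -DP !mulmxA mulVmx // mul1mx.
have := congr1 (fun A : 'M[R]_(m * b) => A i j) EP.
rewrite mul_mx_diag mul_diag_mx !mxE eqxx eq_sym (negbTE hij) mulr0 mul1r.
by move=> <-.
Qed.

Theorem theorem4 (R : realFieldType) (m b : nat) (L : 'M[R]_(m * b))
  (bv : 'cV[R]_(m * b))
  (x : nat -> 'cV[R]_(m * b))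
  (s : 'I_(m * b) -> nat -> nat) (u : nat -> 'I_m) (shat : nat) :
  lower_block_triangular L ->
  (forall k : 'I_m, diag_block L k \in unitmx) ->
  (forall (alpha : 'I_(m * b)) (j : nat), (1 <= j)%N ->
     (s alpha j <= minn (j - 1) shat)%N) ->
  (forall (i : 'I_m) (j : nat), exists l : nat, (j < l)%N /\ u l = i) ->
  (forall (j : nat), (1 <= j)%N -> forall alpha : 'I_(m * b),
     x j.+1 alpha 0 =
       if (alpha %/ b == u j)%N
       then psi L bv (\col_beta x (j - s beta j)%N beta 0) alpha 0
       else x j alpha 0) ->
  exists J : nat, forall j : nat, (J <= j)%N -> x j = invmx L *m bv.
Proof.
move=> hL hDu hs hu hx.
have Du : blockD L \in unitmx.
  apply: ker_unit; apply: lbt_ker; first exact: blockD_lbt.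
  by move=> k; rewrite blockD_diag.
have Lu : L \in unitmx by apply: ker_unit; apply: lbt_ker.
set y := invmx L *m bv.
have psiy : psi L bv y = y.
  rewrite /psi /blockLt mulmxBl mulKVmx // mulmxBr mulKmx //.
  by rewrite opprB addrC subrK.
have K : forall (z : 'cV[R]_(m * b)) (alpha : 'I_(m * b)),
    (forall beta : 'I_(m * b), (beta %/ b < alpha %/ b)%N -> z beta 0 = y beta 0) ->
    psi L bv z alpha 0 = y alpha 0.
  move=> z alpha hz; rewrite -psiy /psi !mxE; congr (_ - _).
  apply: eq_bigr => j _.
  case: (eqVneq (alpha %/ b)%N (j %/ b)%N) => e; last first.
    by rewrite invD_blk ?mul0r // => i k; apply: blockD_off.
  congr (_ * _); rewrite !mxE; apply: eq_bigr => k _.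
  case: (ltnP (k %/ b)%N (j %/ b)%N) => hk; first by rewrite hz // e.
  suff -> : blockLt L j k = 0 by rewrite !mul0r.
  rewrite /blockLt !mxE; case: eqP => [_|ne]; first by rewrite subrr.
  rewrite hL ?subrr //; rewrite ltn_neqAle hk andbT; apply/eqP => h; apply: ne.
  by rewrite h.
have main : forall c, (c <= m)%N -> exists J, forall j, (J <= j)%N ->
    forall alpha : 'I_(m * b), (alpha %/ b < c)%N -> x j alpha 0 = y alpha 0.
  elim=> [_|c IH cm]; first by exists 0%N.
  have [J HJ] := IH (ltnW cm).
  pose cc : 'I_m := Ordinal cm.
  have [l [hl hul]] := hu cc (J + shat)%N.
  have helper : forall j, (l <= j)%N -> u j = cc -> forall alpha : 'I_(m * b),
      (alpha %/ b)%N = c -> x j.+1 alpha 0 = y alpha 0.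
    move=> j hj huj alpha ha.
    have j1 : (1 <= j)%N by lia.
    rewrite hx // ha huj eqxx; apply: K => beta hbeta; rewrite mxE.
    apply: HJ; last by rewrite -ha.
    have := hs beta j j1; rewrite leq_min => /andP [_ h2]; lia.
  have hk : forall k (alpha : 'I_(m * b)), (alpha %/ b)%N = c -> x (l + k).+1 alpha 0 = y alpha 0.
    elim=> [|k IHk] alpha ha; first by rewrite addn0; apply: helper.
    case: (eqVneq (u (l + k.+1)%N) cc) => e; first by apply: helper => //; lia.
    have j1 : (1 <= l + k.+1)%N by lia.
    rewrite hx // ifF; first by rewrite addnS; apply: IHk.
    apply/negbTE; rewrite ha; apply: contra e => /eqP h.
    by apply/eqP; apply: val_inj; rewrite /= -h.
  exists l.+1 => j hj alpha.
  rewrite ltnS leq_eqVlt => /orP [/eqP ha|ha]; last by apply: HJ => //; lia.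
  have -> : j = (l + (j - l.+1)).+1 by lia.
  exact: hk.
have [J HJ] := main m (leqnn m).
exists J => j hj; apply/matrixP => a z; rewrite ord1.
by apply: HJ => //; apply: blk_lt.
Qed.
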